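(* Let $(S,\cdot)$ be a discrete semigroup, let $\mathcal{F}$ be a filter on $S$ such that $\overline{\mathcal{F}}$ is a subsemigroup of $\beta S$, let $(X,\langle T_s\rangle_{s\in S})$ be a dynamical system, and let $x\in X$. Then for each $F\in\mathcal{F}$ there is an $\mathcal{F}$-uniformly recurrent point $y\in\overline{\{T_s(x): s\in F\}}$ such that $x$ and $y$ are $\mathcal{F}$-proximal.
   Context: $\beta S$ is the Stone–Čech compactification of $S$ with its right topological semigroup structure; $\overline{\mathcal{F}}=\bigcap_{F\in\mathcal{F}}\overline{F}$ is the set of ultrafilters containing $\mathcal{F}$. A dynamical system $(X,\langle T_s\rangle_{s\in S})$: $X$ compact Hausdorff, each $T_s$ continuous, $T_s\circ T_t=T_{st}$. A set $A\subseteq S$ is $\mathcal{F}$-syndetic if for every $F\in\mathcal{F}$ there is a finite $G\subseteq F$ with $\bigcup_{t\in G}t^{-1}A\in\mathcal{F}$. A point $y$ is $\mathcal{F}$-uniformly recurrent if for every neighbourhood $U$ of $y$, $\{s\in S:T_s(y)\in U\}$ is $\mathcal{F}$-syndetic. Points $x,y$ are $\mathcal{F}$-proximal if for every neighbourhood $U$ of the diagonal in $X\times X$ and every $F\in\mathcal{F}$ there is $s\in F$ with $(T_s(x),T_s(y))\in U$. *)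

(* Defs.v *)
From mathcomp Require Import all_boot all_order.
From mathcomp Require Import all_classical topology.
Set Implicit Arguments. Unset Strict Implicit. Unset Printing Implicit Defensive.
Local Open Scope classical_set_scope.

Section Defs.
Variable S : Type.
Variable mul : S -> S -> S.

Definition linv (t : S) (A : set S) : set S := [set s | A (mul t s)].

Definition is_filter (F : set (set S)) : Prop :=
  [/\ F setT, ~ F set0,
      (forall A B, F A -> F B -> F (A `&` B)) &
      (forall A B, A `<=` B -> F A -> F B)].

(* points of beta S = ultrafilters on S *)
Definition is_ultrafilter (p : set (set S)) : Prop :=
  is_filter p /\ (forall A, p A \/ p (~` A)).

(* the semigroup operation of beta S (Hindman--Strauss convention):
   A \in p . q  iff  {s | s^{-1}A \in q} \in p *)
Definition bS_mul (p q : set (set S)) : set (set S) :=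
  [set A | p [set s | q (linv s A)]].

(* closure of F in beta S: ultrafilters containing F *)
Definition Fbar (F : set (set S)) : set (set (set S)) :=
  [set p | is_ultrafilter p /\ F `<=` p].

Definition Fbar_subsemigroup (F : set (set S)) : Prop :=
  (exists p, Fbar F p) /\
  (forall p q, Fbar F p -> Fbar F q -> Fbar F (bS_mul p q)).

Definition F_syndetic (F : set (set S)) (A : set S) : Prop :=
  forall B, F B -> exists G : set S,
    [/\ finite_set G, G `<=` B & F (\bigcup_(t in G) linv t A)].
End Defs.

Section Dyn.
Context {S : Type} (mul : S -> S -> S) {X : topologicalType}.
Variable T : S -> X -> X.

Definition F_unif_recurrent (F : set (set S)) (y : X) : Prop :=
  forall U, nbhs y U -> F_syndetic mul F [set s | U (T s y)].

Definition diag_nbhs (U : set (X * X)) : Prop :=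
  exists O : set (X * X), [/\ open O, (forall z, O (z, z)) & O `<=` U].

Definition F_proximal (F : set (set S)) (x y : X) : Prop :=
  forall U, diag_nbhs U -> forall B, F B -> exists2 s, B s & U (T s x, T s y).
End Dyn.

(* Main.v *)
Require Import Defs.
From mathcomp Require Import all_boot all_order.
From mathcomp Require Import all_classical topology.
Local Open Scope classical_set_scope.
Set Implicit Arguments. Unset Strict Implicit. Unset Printing Implicit Defensive.

Lemma zornP T (P : set (set T)) : (exists A, P A) ->
  (forall C, C `<=` P -> total_on C subset -> C !=set0 -> P (\bigcup_(X in C) X)) ->
  exists A, P A /\ forall B, P B -> A `<=` B -> B = A.
Proof.
move=> [A0 PA0] hch.
have [|A [PA Amax]] := @Zorn_bigcup _ (P `|` [set set0]).
  move=> C CP Ctot.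
  have [[X [CX PX]]|nP] := pselect (exists X, C X /\ P X).
    left.
    have -> : \bigcup_(X in C) X = \bigcup_(X in C `&` P) X.
      apply/seteqP; split=> x [Y CY Yx]; last by exists Y => //; case: CY.
      exists Y => //; split => //; case: (CP Y CY) => // /= YE.
      by rewrite YE in Yx.
    apply: hch; first by move=> ? [].
      by move=> s t [Cs _] [Ct _]; apply: Ctot.
    by exists X.
  right; apply/seteqP; split=> // x [Y CY Yx].
  case: (CP Y CY) => [PY|/= YE]; first by exfalso; apply: nP; exists Y.
  by rewrite YE in Yx.
have PA' : P A.
  case: PA => // /= Aeq; subst A.
  have [E|] := pselect (A0 = set0); first by rewrite -E.
  move=> /eqP /set0P [x A0x]; exfalso; apply: (Amax A0); last by left.
  by split => // /(_ x A0x).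
exists A; split => // B PB AB.
have [BA|nBA] := pselect (B `<=` A); first by rewrite eqEsubset; split.
by exfalso; apply: (Amax B); [split|left].
Qed.

Section UF.
Variable S : Type.
Implicit Types (G H : set (set S)) (p q r : set (set S)) (A B D : set S).

Lemma fT G : is_filter G -> G setT. Proof. by case. Qed.
Lemma f0 G : is_filter G -> ~ G set0. Proof. by case. Qed.
Lemma fI G A B : is_filter G -> G A -> G B -> G (A `&` B). Proof. by case=> _ _ h _; apply: h. Qed.
Lemma fS G A B : is_filter G -> A `<=` B -> G A -> G B. Proof. by case=> _ _ _ h; apply: h. Qed.
Lemma f_ne G A : is_filter G -> G A -> exists s, A s.
Proof.
move=> hG GA; apply: contrapT => hn.
have E : A = set0 by rewrite -subset0 => x Ax; apply: hn; exists x.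
by rewrite E in GA; exact: (f0 hG GA).
Qed.
Lemma ufF p : is_ultrafilter p -> is_filter p. Proof. by case. Qed.
Lemma ufC p A : is_ultrafilter p -> ~ p A -> p (~` A).
Proof. by case=> _ h nA; case: (h A). Qed.
Lemma ufN p A : is_ultrafilter p -> p A -> ~ p (~` A).
Proof.
move=> [hp _] pA pC; apply: (f0 hp); apply: (fS hp _ (fI hp pA pC)).
by move=> x [].
Qed.
Lemma uf_eq p q : is_ultrafilter p -> is_ultrafilter q -> p `<=` q -> p = q.
Proof.
move=> hp hq pq; apply/seteqP; split => // A qA.
apply: contrapT => npA; apply: (ufN hq qA); apply: pq; exact: ufC.
Qed.

Definition gen G (Bs : set (set S)) : set (set S) :=
  [set D | exists E0 B0, [/\ G E0, Bs B0 & E0 `&` B0 `<=` D]].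

Lemma gen_filter G Bs : is_filter G -> (exists B0, Bs B0) ->
  (forall B1 B2, Bs B1 -> Bs B2 -> exists2 B3, Bs B3 & B3 `<=` B1 `&` B2) ->
  (forall E0 B0, G E0 -> Bs B0 -> exists s, (E0 `&` B0) s) ->
  is_filter (gen G Bs).
Proof.
move=> hG [B0 BB0] hI hne; split.
- by exists setT, B0; split => //; exact: fT.
- move=> [E0 [B1 [GE0 BB1 sub]]]; have [s Hs] := hne _ _ GE0 BB1.
  exact: (sub s Hs).
- move=> A B [E1 [B1 [GE1 BB1 s1]]] [E2 [B2 [GE2 BB2 s2]]].
  have [B3 BB3 s3] := hI _ _ BB1 BB2.
  exists (E1 `&` E2), B3; split => //; first exact: fI.
  move=> x [[g1 g2] b3]; have [b1 b2] := s3 x b3; split.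
    by apply: s1. by apply: s2.
- move=> A B AB [E1 [B1 [GE1 BB1 s1]]]; exists E1, B1; split => //.
  by move=> x /s1; apply: AB.
Qed.

Lemma gen_subl G Bs : (exists B0, Bs B0) -> G `<=` gen G Bs.
Proof. by move=> [B0 BB0] A GA; exists A, B0; split => // x []. Qed.
Lemma gen_subr G Bs : is_filter G -> Bs `<=` gen G Bs.
Proof. by move=> hG A BA; exists setT, A; split; [exact: fT| done | by move=> x []]. Qed.
Lemma gen_bar G Bs r : is_filter r -> G `<=` r -> Bs `<=` r -> gen G Bs `<=` r.
Proof.
move=> hr Gr Br D [E0 [B0 [GE0 BB0 sub]]].
exact: (fS hr sub (fI hr (Gr _ GE0) (Br _ BB0))).
Qed.

Lemma chain_filter (C : set (set (set S))) G :
  C `<=` (fun H => is_filter H /\ G `<=` H) -> total_on C subset -> C !=set0 ->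
  is_filter (\bigcup_(X in C) X) /\ G `<=` \bigcup_(X in C) X.
Proof.
move=> CP Ctot [H0 CH0]; have [hH0 GH0] := CP _ CH0; split; last first.
  by move=> A GA; exists H0 => //; apply: GH0.
split.
- by exists H0 => //; exact: fT.
- by move=> [H CH]; apply: f0; exact: (CP _ CH).1.
- move=> A B [H1 C1 A1] [H2 C2 B2].
  have [h1 _] := CP _ C1; have [h2 _] := CP _ C2.
  case: (Ctot _ _ C1 C2) => s12.
    by exists H2 => //; apply: fI => //; apply: s12.
  by exists H1 => //; apply: fI => //; apply: s12.
- move=> A B AB [H CH HA]; exists H => //; apply: fS AB HA; exact: (CP _ CH).1.
Qed.

Lemma UL G : is_filter G -> exists p, Fbar G p.
Proof.
move=> hG.
have [M [[hM GM] Mmax]] := @zornP _ (fun H => is_filter H /\ G `<=` H)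
  (ex_intro _ G (conj hG (@subset_refl _ G)))
  (fun C CP Ctot Cne => chain_filter CP Ctot Cne).
exists M; split => //; split => // A.
have [//|nA] := pselect (M A); first by left.
have [//|nCA] := pselect (M (~` A)); first by right.
exfalso; apply: nA.
have hg : is_filter (gen M [set A]).
  apply: gen_filter => //; first by exists A.
    by move=> B1 B2 -> ->; exists A => // x Ax.
  move=> E0 B0 ME0 ->; apply: contrapT => hn; apply: nCA.
  by apply: (fS hM _ ME0) => x G0x Ax; apply: hn; exists x.
have <- : gen M [set A] = M.
  have gs : M `<=` gen M [set A] by apply: gen_subl; exists A.
  by apply: Mmax; [split; [exact: hg | exact: (subset_trans GM gs)] | exact: gs].
exact: gen_subr.
Qed.

Lemma KL G B : is_filter G -> (forall p, Fbar G p -> p B) -> G B.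
Proof.
move=> hG hB; apply: contrapT => nB.
have hg : is_filter (gen G [set ~` B]).
  apply: gen_filter => //; first by exists (~` B).
    by move=> B1 B2 -> ->; exists (~` B).
  move=> E0 B0 GE0 ->; apply: contrapT => hn; apply: nB.
  apply: (fS hG _ GE0) => x G0x; apply: contrapT => nBx; apply: hn; exists x; done.
have [p [pu Gp]] := UL hg.
have gs : G `<=` gen G [set ~` B] by apply: gen_subl; exists (~` B).
have pB := hB p (conj pu (subset_trans gs Gp)).
by apply: (ufN pu pB); apply: Gp; apply: gen_subr.
Qed.

End UF.

Section SG.
Variable S : Type.
Variable mul : S -> S -> S.
Hypothesis mulA : forall a b c, mul a (mul b c) = mul (mul a b) c.
Implicit Types (G H : set (set S)) (p q r : set (set S)) (A B D : set S).
Local Notation m := (bS_mul mul).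
Local Notation li := (linv mul).

Definition mulF G p : set (set S) := [set A | G [set s | p (li s A)]].

Lemma mulF_filter G p : is_filter G -> is_ultrafilter p -> is_filter (mulF G p).
Proof.
move=> hG [hp pu]; split.
- by apply: (fS hG _ (fT hG)) => s _; exact: (fT hp).
- move=> h; have [s Hs] := f_ne hG h; exact: (f0 hp Hs).
- move=> A B hA hB; apply: (fS hG _ (fI hG hA hB)) => s [sA sB].
  exact: (fI hp sA sB).
- move=> A B AB hA; apply: (fS hG _ hA) => s sA.
  by apply: (fS hp _ sA) => t; apply: AB.
Qed.

Lemma uf_mul p q : is_ultrafilter p -> is_ultrafilter q -> is_ultrafilter (m p q).
Proof.
move=> hp hq; split; first exact: (mulF_filter (ufF hp) hq).
move=> A; have [h|h] := (hp.2 [set s | q (li s A)]); first by left.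
right; apply: (fS (ufF hp) _ h) => s nq; exact: (ufC hq nq).
Qed.

Lemma mul_assoc p q r : m p (m q r) = m (m p q) r.
Proof.
rewrite /bS_mul /linv; apply/funext => A; congr (p _); apply/funext => s.
congr (q _); apply/funext => t; congr (r _); apply/funext => u.
by rewrite /= mulA.
Qed.

Lemma mulF_bar G p q : is_ultrafilter p -> Fbar G q -> Fbar (mulF G p) (m q p).
Proof.
move=> hp [hq Gq]; split; first exact: uf_mul.
by move=> A hA; apply: Gq.
Qed.

Lemma mulF_CL G p r : is_filter G -> is_ultrafilter p -> Fbar (mulF G p) r ->
  exists q, Fbar G q /\ r = m q p.
Proof.
move=> hG hp [hr Gr].
pose Bs := [set E | exists2 A, r A & E = [set s | p (li s A)]].
have hg : is_filter (gen G Bs).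
  apply: gen_filter => //.
  - by exists [set s | p (li s setT)]; exists setT => //; exact: (fT (ufF hr)).
  - move=> B1 B2 [A1 rA1 ->] [A2 rA2 ->].
    exists [set s | p (li s (A1 `&` A2))]; first by exists (A1 `&` A2) => //; exact: (fI (ufF hr)).
    move=> s ps; split; apply: (fS (ufF hp) _ ps) => t []//.
  - move=> E0 B0 GE0 [A rA ->]; apply: contrapT => hn.
    apply: (ufN hr rA); apply: Gr; apply: (fS hG _ GE0) => s E0s.
    apply: (ufC hp) => ps; apply: hn; exists s; done.
have [q [hq gq]] := UL hg.
have gs : G `<=` gen G Bs.
  by apply: gen_subl; exists [set s | p (li s setT)]; exists setT => //; exact: (fT (ufF hr)).
exists q; split; first by split => //; apply: subset_trans gs gq.
apply: uf_eq => //; first exact: uf_mul.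
move=> A rA; apply: gq; apply: (gen_subr hG); by exists A.
Qed.

End SG.

Section Min.
Variable S : Type.
Variable mul : S -> S -> S.
Hypothesis mulA : forall a b c, mul a (mul b c) = mul (mul a b) c.
Variable F : set (set S).
Hypothesis hF : is_filter F.
Hypothesis hFbar : Fbar_subsemigroup mul F.
Implicit Types (G H : set (set S)) (p q r : set (set S)) (A B D : set S).
Local Notation m := (bS_mul mul).
Local Notation li := (linv mul).

Lemma th3 (a b c : Prop) : [/\ a, b & c] -> c. Proof. by case. Qed.

Lemma bar_mono G H p : G `<=` H -> Fbar H p -> Fbar G p.
Proof. by move=> GH [hp Hp]; split => //; apply: subset_trans Hp. Qed.

Definition LI G := forall q p, Fbar F q -> Fbar G p -> Fbar G (m q p).
Definition SGp G := forall p q, Fbar G p -> Fbar G q -> Fbar G (m p q).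

Lemma chainQ (C : set (set (set S))) G0 (Q : set (set S) -> Prop) :
  C `<=` (fun H => [/\ is_filter H, G0 `<=` H & Q H]) -> total_on C subset -> C !=set0 ->
  (forall p, Fbar (\bigcup_(X in C) X) p -> forall H, C H -> Fbar H p) ->
  ((forall p, Fbar (\bigcup_(X in C) X) p -> forall H, C H -> Fbar H p) ->
    Q (\bigcup_(X in C) X)) ->
  [/\ is_filter (\bigcup_(X in C) X), G0 `<=` \bigcup_(X in C) X & Q (\bigcup_(X in C) X)].
Proof.
move=> CP Ct Cne hb hQ.
have [h1 h2] := @chain_filter _ C G0 (fun H CH => let: And3 a b _ := CP H CH in conj a b) Ct Cne.
by split => //; apply: hQ.
Qed.

Lemma bar_bigcup (C : set (set (set S))) p :
  Fbar (\bigcup_(X in C) X) p -> forall H, C H -> Fbar H p.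
Proof. by move=> hp H CH; apply: bar_mono hp => A HA; exists H. Qed.

Lemma bar_to_bigcup (C : set (set (set S))) r : C !=set0 ->
  (forall H, C H -> Fbar H r) -> Fbar (\bigcup_(X in C) X) r.
Proof.
move=> [H0 CH0] h; split; first exact: (h _ CH0).1.
by move=> A [H CH HA]; exact: (h _ CH).2.
Qed.

Theorem min_idem : exists u, [/\ Fbar F u, m u u = u &
  forall q, Fbar F q -> exists r, Fbar F r /\ m r (m q u) = u].
Proof.
have LIF : LI F by move=> q p hq hp; exact: hFbar.2.
have [G0 [[hG0 FG0 LG0] G0max]] :=
  @zornP _ (fun H => [/\ is_filter H, F `<=` H & LI H]) (ex_intro _ F (And3 hF (@subset_refl _ F) LIF))
   (fun C CP Ct Cne => chainQ CP Ct Cne (@bar_bigcup C)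
     (fun hb q p hq hp => bar_to_bigcup Cne (fun H CH => th3 (CP H CH) q p hq (hb p hp H CH)))).
have SG0 : SGp G0 by move=> p q hp hq; apply: LG0 => //; apply: bar_mono hp.
have [H0 [[hH0 GH0 SH0] H0max]] :=
  @zornP _ (fun H => [/\ is_filter H, G0 `<=` H & SGp H]) (ex_intro _ G0 (And3 hG0 (@subset_refl _ G0) SG0))
   (fun C CP Ct Cne => chainQ CP Ct Cne (@bar_bigcup C)
     (fun hb p q hp hq => bar_to_bigcup Cne (fun H CH => th3 (CP H CH) p q (hb p hp H CH) (hb q hq H CH)))).
have [p hpH0] := UL hH0.
have pu := hpH0.1.
have H01 : H0 `<=` mulF mul H0 p.
  move=> A HA; apply: (KL hH0) => q hq; exact: ((SH0 q p hq hpH0).2 A HA).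
have SH1 : SGp (mulF mul H0 p).
  move=> r1 r2 /(mulF_CL hH0 pu) [q1 [hq1 ->]] /(mulF_CL hH0 pu) [q2 [hq2 ->]].
  rewrite (mul_assoc mulA); apply: (mulF_bar mul) => //.
  exact: (SH0 _ _ (SH0 _ _ hq1 hpH0) hq2).
have E1 := H0max _ (And3 (mulF_filter mul hH0 pu) (subset_trans GH0 H01) SH1) H01.
have [q [hq pq]] : exists q, Fbar H0 q /\ p = m q p.
  by apply: (mulF_CL hH0 pu); rewrite E1.
pose Bs := [set E | exists2 A, p A & E = [set s | p (li s A)]].
have Bsne : exists B0, Bs B0.
  by exists [set s | p (li s setT)]; exists setT => //; exact: (fT (ufF pu)).
have hH2 : is_filter (gen H0 Bs).
  apply: gen_filter => //.
  - move=> B1 B2 [A1 rA1 ->] [A2 rA2 ->].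
    exists [set s | p (li s (A1 `&` A2))]; first by exists (A1 `&` A2) => //; exact: (fI (ufF pu)).
    move=> s ps; split; apply: (fS (ufF pu) _ ps) => t []//.
  - move=> E0 B0 HE0 [A pA ->].
    have qA : (m q p) A by rewrite -pq.
    apply: (f_ne (ufF hq.1)); apply: (fI (ufF hq.1)) => //; exact: hq.2.
have H02 : H0 `<=` gen H0 Bs by apply: gen_subl.
have SH2 : SGp (gen H0 Bs).
  have key : forall r, Fbar (gen H0 Bs) r -> Fbar H0 r /\ m r p = p.
    move=> r hr; have hr0 := bar_mono H02 hr; split => //.
    apply/esym/uf_eq => //; first by apply: (uf_mul mul) => //; exact: hr0.1.
    move=> A pA; apply: hr.2; apply: (gen_subr hH0); by exists A.
  move=> r1 r2 hr1 hr2; have [h1 e1] := key _ hr1; have [h2 e2] := key _ hr2.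
  have h12 := SH0 _ _ h1 h2; split; first exact: h12.1.
  apply: gen_bar; [exact: (ufF h12.1) | exact: h12.2 |].
  move=> E [A pA ->] /=.
  have : (m (m r1 r2) p) A by rewrite -(mul_assoc mulA) e2 e1.
  done.
have E2 := H0max _ (And3 hH2 (subset_trans GH0 H02) SH2) H02.
have ppp : m p p = p.
  apply/esym/uf_eq => //; first exact: (uf_mul mul).
  move=> A pA; have : gen H0 Bs [set s | p (li s A)] by apply: (gen_subr hH0); exists A.
  rewrite E2 => /hpH0.2; done.
have huG0 : Fbar G0 p := bar_mono GH0 hpH0.
have huF : Fbar F p := bar_mono FG0 huG0.
exists p; split => // q0 hq0.
set qu := m q0 p.
have hqu : Fbar G0 qu by apply: LG0.
have hquF : Fbar F qu := bar_mono FG0 hqu.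
have G01 : G0 `<=` mulF mul F qu.
  move=> A GA; apply: (KL hF) => r hr.
  exact: ((LG0 _ _ hr hqu).2 A GA).
have LG1 : LI (mulF mul F qu).
  move=> q' r' hq' /(mulF_CL hF hquF.1) [r [hr ->]].
  rewrite (mul_assoc mulA); apply: (mulF_bar mul) => //; first exact: hquF.1.
  exact: LIF.
have E3 := G0max _ (And3 (mulF_filter mul hF hquF.1) (subset_trans FG0 G01) LG1) G01.
have := huG0; rewrite -E3 => /(mulF_CL hF hquF.1) [r [hr e]].
by exists r; split => //; rewrite -e.
Qed.

End Min.

Section Dyn.
Variable S : Type.
Variable mul : S -> S -> S.
Variable X : topologicalType.
Hypothesis hcomp : compact [set: X].
Hypothesis hhaus : hausdorff_space X.
Variable T : S -> X -> X.
Hypothesis hcont : forall s, continuous (T s).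
Hypothesis hact : forall s t, T s \o T t = T (mul s t).
Implicit Types (p q r : set (set S)).

Definition Lim p (z w : X) := forall W, nbhs w W -> p [set s | W (T s z)].

Lemma lim_ex p z : is_ultrafilter p -> exists w, Lim p z w.
Proof.
move=> hp; pose Fz := [set W : set X | p [set s | W (T s z)]].
have hpf := ufF hp.
have PF : ProperFilter Fz.
  apply: Build_ProperFilter.
    by move=> h; have [s Hs] := f_ne hpf h.
  apply: Build_Filter.
  - by apply: (fS hpf _ (fT hpf)).
  - by move=> A B hA hB; apply: (fS hpf _ (fI hpf hA hB)).
  - by move=> A B AB hA; apply: (fS hpf _ hA) => s; apply: AB.
have [w [_ cw]] := hcomp PF (fS hpf (fun _ _ => I) (fT hpf)).
exists w => W nW; apply: contrapT => nP.
have hC : Fz (~` W) by apply: (ufC hp).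
by have [a [na Wa]] := cw _ _ hC nW.
Qed.

Lemma lim_uniq p z w1 w2 : is_ultrafilter p -> Lim p z w1 -> Lim p z w2 -> w1 = w2.
Proof.
move=> hp l1 l2; apply: hhaus => A B nA nB.
have [s [As Bs]] := f_ne (ufF hp) (fI (ufF hp) (l1 _ nA) (l2 _ nB)).
by exists (T s z).
Qed.

Lemma lim_act p q z w v : is_ultrafilter p -> is_ultrafilter q -> Lim q z w -> Lim p w v ->
  Lim (bS_mul mul p q) z v.
Proof.
move=> hp hq lq lp W; rewrite nbhsE => -[O [oO Ov] OW].
have := lp O (open_nbhs_nbhs (conj oO Ov)).
apply: (fS (ufF hp)) => s Os.
have nO : nbhs (T s w) O by apply: open_nbhs_nbhs.
have := lq _ (hcont nO).
apply: (fS (ufF hq)) => t /= Ot; rewrite /linv /= -hact /=.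
by apply: OW.
Qed.
End Dyn.

Unset Implicit Arguments.
Theorem lemma12 (S : Type) (mul : S -> S -> S)
  (mulA : forall a b c, mul a (mul b c) = mul (mul a b) c)
  (F : set (set S)) (hF : is_filter F) (hFbar : Fbar_subsemigroup mul F)
  (X : topologicalType) (hcomp : compact [set: X]) (hhaus : hausdorff_space X)
  (T : S -> X -> X) (hcont : forall s, continuous (T s))
  (hact : forall s t, T s \o T t = T (mul s t))
  (x : X) :
  forall B, F B -> exists y : X,
    [/\ closure [set T s x | s in B] y,
        F_unif_recurrent mul T F y &
        F_proximal T F x y].
Proof.
move=> B FB.
have [u [huF uu umin]] := min_idem mulA hF hFbar.
have hu := huF.1.
have [y ly] := lim_ex hcomp T x hu.
have lyy : Lim T u y y.
  have [v lv] := lim_ex hcomp T y hu.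
  have := lim_act hcont hact hu hu ly lv; rewrite uu => lv'.
  by move: lv; rewrite (lim_uniq hhaus hu lv' ly).
exists y; split.
- move=> N nN; have [s [Ns Bs]] := f_ne hu.1 (fI hu.1 (ly _ nN) (huF.2 _ FB)).
  by exists (T s x); split => //; exists s.
- move=> U nU C FC; apply: contrapT => nsyn.
  pose A := [set s | U (T s y)].
  pose Bs := [set E | exists G, [/\ finite_set G, G `<=` C & E = ~` (\bigcup_(t in G) linv mul t A)]].
  have hg : is_filter (gen F Bs).
    apply: gen_filter => //.
    - exists (~` (\bigcup_(t in set0) linv mul t A)); exists set0; split; [exact: finite_set0 | by [] | by []].
    - move=> B1 B2 [G1 [f1 s1 ->]] [G2 [f2 s2 ->]].
      exists (~` (\bigcup_(t in G1 `|` G2) linv mul t A)).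
        exists (G1 `|` G2); split => //; first by rewrite finite_setU.
        by move=> t [/s1|/s2].
      move=> z nz; split => -[t Gt At]; apply: nz; exists t => //.
        by left. by right.
    - move=> E0 B0 FE0 [G [fG sG ->]]; apply: contrapT => hn; apply: nsyn.
      exists G; split => //; apply: (fS hF _ FE0) => z E0z.
      apply: contrapT => nz; apply: hn; exists z; done.
  have [q [hq gq]] := UL hg.
  have hqF : Fbar F q.
    split => //; apply: subset_trans gq; apply: gen_subl.
    exists (~` (\bigcup_(t in set0) linv mul t A)); exists set0; split; [exact: finite_set0 | by [] | by []].
  have qC : forall t, C t -> q (~` linv mul t A).
    move=> t Ct; apply: (fS hq.1 _ (gq (~` (\bigcup_(t0 in [set t]) linv mul t0 A)) (gen_subr hF _))).
      move=> z nz Az; apply: nz; exists t => //.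
    by exists [set t]; split; [exact: finite_set1| move=> ? -> | by []].
  have [r [hrF e]] := umin q hqF.
  have hrq := uf_mul mul hrF.1 hq.
  have [v lv] := lim_ex hcomp T y hrq.
  have := lim_act hcont hact hrq hu ly lv.
  rewrite -(mul_assoc mulA) e => lv'.
  have vy := lim_uniq hhaus hu lv' ly; subst v.
  have := fI hrF.1.1 (lv _ nU) (hrF.2 _ FC).
  move=> /(f_ne hrF.1.1) [t [qt Ct]].
  exact: (ufN hq qt (qC t Ct)).
- move=> U [O [oO Od OU]] C FC.
  have : nbhs (y, y) O by apply: open_nbhs_nbhs; split.
  move=> [[P1 P2] /= [n1 n2] PO].
  have := fI hu.1 (fI hu.1 (ly _ n1) (lyy _ n2)) (huF.2 _ FC).
  move=> /(f_ne hu.1) [s [[h1 h2] Cs]].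
  by exists s => //; apply: OU; apply: PO.
Qed.
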